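(* Let $A$ be a commutative $\mathbb F_p$-algebra ($p$ a prime), let $B=A[z_1,\ldots,z_n]$ be the polynomial ring in $n$ variables over $A$, and let $a_1,\ldots,a_n\in A$ be a regular sequence in $A$. Let $\mathcal D:B^n\to B$ be the $A$-linear map $\mathcal D(h_1,\ldots,h_n)=\sum_{i=1}^n(\partial_{z_i}h_i-a_ih_i)$. Then the image $\mathrm{Im}\,\mathcal D$ is a Mathieu subspace of $B$ (viewing $B$ as an $\mathbb F_p$-algebra).
   Context: Let $k$ be a field and $R$ a commutative $k$-algebra. A $k$-vector subspace $\mathcal M\subseteq R$ is called a Mathieu subspace of $R$ if for every $f\in R$ the following holds: if $f^m\in\mathcal M$ for all $m\ge 1$, then for every $g\in R$ one has $f^mg\in\mathcal M$ for all sufficiently large $m$. $\partial_{z_i}$ denotes the formal partial derivative with respect to $z_i$ on $B$ (which is $A$-linear). *)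

(* Defs.v *)
From HB Require Import structures.
From mathcomp Require Import all_boot all_order all_algebra.
Set Implicit Arguments. Unset Strict Implicit. Unset Printing Implicit Defensive.
Import Order.TTheory GRing.Theory Num.Theory.
Local Open Scope ring_scope.

(* B = A[z_1,...,z_n], realized as iterated univariate polynomials
   A[z_1][z_2]...[z_n] (z_n is the outermost variable). *)
Fixpoint mpoly (A : comNzRingType) (n : nat) : comNzRingType :=
  match n with
  | 0 => A
  | m.+1 => ({poly mpoly A m} : comNzRingType)
  end.

Fixpoint mconst (A : comNzRingType) (n : nat) : A -> mpoly A n :=
  match n return A -> mpoly A n with
  | 0 => fun a => a
  | m.+1 => fun a => (mconst m a)%:P
  end.

(* Formal partial derivative with respect to the variable of index i
   (index i : nat, 0 <= i < n, corresponds to z_(i+1)).  It is A-linear. *)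
Fixpoint mderiv (A : comNzRingType) (n : nat) (i : nat) : mpoly A n -> mpoly A n :=
  match n return mpoly A n -> mpoly A n with
  | 0 => fun _ => 0
  | m.+1 => fun p => if i == m then deriv p else map_poly (@mderiv A m i) p
  end.

Definition in_ideal_first (A : comNzRingType) (n : nat) (a : 'I_n -> A)
    (i : nat) (x : A) : Prop :=
  exists c : 'I_n -> A, x = \sum_(j < n | (j < i)%N) c j * a j.

Definition regular_seq (A : comNzRingType) (n : nat) (a : 'I_n -> A) : Prop :=
  (forall (i : 'I_n) (x : A),
      in_ideal_first a i (a i * x) -> in_ideal_first a i x)
  /\ ~ in_ideal_first a n 1.

(* Mathieu subspace of a commutative F_p-algebra R: M is an F_p-subspace
   (i.e. an additive subgroup, since F_p-scalars are integer multiples)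
   and the Mathieu condition holds. *)
Definition Mathieu_subspace (R : comNzRingType) (M : R -> Prop) : Prop :=
  [/\ M 0,
      (forall x y, M x -> M y -> M (x - y)),
      (forall x y, M x -> M y -> M (x + y)) &
      (forall f : R, (forall m : nat, (1 <= m)%N -> M (f ^+ m)) ->
         forall g : R, exists N : nat, forall m : nat, (N <= m)%N -> M (f ^+ m * g))].

Definition imD (A : comNzRingType) (n : nat) (a : 'I_n -> A) (f : mpoly A n) : Prop :=
  exists h : 'I_n -> mpoly A n,
    f = \sum_(i < n) (mderiv i (h i) - mconst n (a i) * h i).

(* Main.v *)
Require Import Defs.
From HB Require Import structures.
From mathcomp Require Import all_boot all_order all_algebra.
From Stdlib Require Import ClassicalEpsilon.
Import GRing.Theory.
Local Open Scope ring_scope.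

Set Implicit Arguments. Unset Strict Implicit. Unset Printing Implicit Defensive.

Section Alg.
Variable A : comNzRingType.
Implicit Types (I J L K : A -> Prop) (x y z : A) (s : seq A).

Definition isId I := [/\ I 0, (forall x y, I x -> I y -> I (x + y)) &
   (forall x y, I y -> I (x * y))].
Definition addI I y : A -> Prop := fun x => exists i t, I i /\ x = i + y * t.
Definition fullI I s := foldl addI I s.
Definition NZD I x := forall z, I (x * z) -> I z.
Fixpoint regl I s := match s with [::] => True | x :: s' => NZD I x /\ regl (addI I x) s' end.
Definition Ieq I J := forall x, I x <-> J x.

Lemma isId_N I x : isId I -> I x -> I (- x).
Proof. by case=> _ _ HM Hx; rewrite -mulN1r; apply: HM. Qed.

Lemma isId_B I x y : isId I -> I x -> I y -> I (x - y).
Proof. move=> HI Hx Hy; have [_ HD _] := HI; apply: HD => //; exact: isId_N. Qed.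

Lemma isId_Mr I x y : isId I -> I x -> I (x * y).
Proof. by case=> _ _ HM Hx; rewrite mulrC; apply: HM. Qed.

Lemma isId_addI I y : isId I -> isId (addI I y).
Proof.
move=> HI; have [H0 HD HM] := HI; split.
- by exists 0, 0; rewrite mulr0 addr0.
- move=> a b [i [t [Hi ->]]] [i' [t' [Hi' ->]]]; exists (i + i'), (t + t'); split.
    exact: HD.
  by rewrite mulrDr addrACA.
- move=> a b [i [t [Hi ->]]]; exists (a * i), (a * t); split; first exact: HM.
  by rewrite mulrDr mulrCA.
Qed.

Lemma isId_fullI I s : isId I -> isId (fullI I s).
Proof. elim: s I => [|y s IH] I HI //=; apply: IH; exact: isId_addI. Qed.

Lemma addI_base I y x : I x -> addI I y x.
Proof. by move=> Hx; exists x, 0; rewrite mulr0 addr0. Qed.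

Lemma addI_gen I y t : isId I -> addI I y (y * t).
Proof. by case=> H0 _ _; exists 0, t; rewrite add0r. Qed.

Lemma addI_mono I J y : (forall x, I x -> J x) -> forall x, addI I y x -> addI J y x.
Proof. by move=> H x [i [t [Hi ->]]]; exists i, t; split=> //; apply: H. Qed.

Lemma addI_ext I J y : Ieq I J -> Ieq (addI I y) (addI J y).
Proof. by move=> H x; split; apply: addI_mono => z /H. Qed.

Lemma fullI_ext I J s : Ieq I J -> Ieq (fullI I s) (fullI J s).
Proof. elim: s I J => [|y s IH] I J H //=; apply: IH; exact: addI_ext. Qed.

Lemma fullI_mono I J s : (forall x, I x -> J x) -> forall x, fullI I s x -> fullI J s x.
Proof. elim: s I J => [|y s IH] I J H //=; apply: IH; exact: addI_mono. Qed.

Lemma fullI_base I s x : I x -> fullI I s x.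
Proof. elim: s I => [|y s IH] I Hx //=; apply: IH; exact: addI_base. Qed.

Lemma addI_comm I x y : Ieq (addI (addI I x) y) (addI (addI I y) x).
Proof.
suff H : forall x y z, addI (addI I x) y z -> addI (addI I y) x z.
  by move=> z; split; apply: H.
move=> a b z [i [t [[i' [t' [Hi' ->]]] ->]]].
exists (i' + b * t), t'; split; first by exists i', t.
by rewrite addrAC.
Qed.

Lemma fullI_addI I y s : Ieq (fullI (addI I y) s) (addI (fullI I s) y).
Proof.
elim: s I => [|z s IH] I //= x.
move: (fullI_ext s (addI_comm I y z) x) (IH (addI I z) x); tauto.
Qed.

Lemma NZD_ext I J x : Ieq I J -> NZD I x -> NZD J x.
Proof. by move=> H HN z /H /HN /H. Qed.

Lemma regl_ext I J s : Ieq I J -> regl I s -> regl J s.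
Proof.
elim: s I J => [|y s IH] I J H //= [H1 H2]; split; first exact: NZD_ext H1.
apply: IH H2; exact: addI_ext.
Qed.

Lemma NZD_pow I x e : NZD I x -> NZD I (x ^+ e).
Proof.
move=> H; elim: e => [|e IH] z; first by rewrite expr0 mul1r.
by rewrite exprS -mulrA => /H /IH.
Qed.

Lemma swap1 I x y : isId I -> NZD I x -> NZD (addI I x) y -> NZD (addI I y) x.
Proof.
move=> HI Hx Hy z [i [t [Hi Ht]]].
have : addI I x (y * t).
  exists (- i), z; split; first exact: isId_N.
  by rewrite Ht addKr.
move=> /Hy [i2 [u [Hi2 Hu]]].
have : I (x * (z - y * u)).
  rewrite mulrBr Ht Hu mulrDr [x * (y * u)]mulrCA.
  rewrite addrA addrK.
  case: HI => _ HD HM; apply: HD => //; exact: HM.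
move=> /Hx H; exists (z - y * u), u; split=> //; by rewrite subrK.
Qed.

Lemma SWAP I x s : isId I -> NZD I x -> regl (addI I x) s -> NZD (fullI I s) x.
Proof.
elim: s I => [|y s IH] I HI Hx //= [Hy Hs].
apply: IH; first exact: isId_addI.
- exact: swap1.
- apply: regl_ext Hs; exact: addI_comm.
Qed.

Lemma TW L y z e : isId L -> NZD L y -> NZD (addI L y) z -> NZD (addI L (y ^+ e)) z.
Proof.
move=> HL Hy Hz; have [H0 HD HM] := HL.
elim: e => [|e IH] w Hw.
  by exists 0, w; rewrite expr0 mul1r add0r.
have : addI L (y ^+ e) (z * w).
  move: Hw => [i [t [Hi ->]]]; exists i, (y * t); split=> //.
  by rewrite exprSr mulrA.
move=> /IH [l [v [Hl Hwv]]].
move: Hw => [l0 [s [Hl0 Hs]]].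
have : L (y ^+ e * (z * v - y * s)).
  have -> : y ^+ e * (z * v - y * s) = l0 - z * l.
    move: Hs; rewrite Hwv mulrDr => Hs.
    have E : y ^+ e * (z * v) = l0 + y ^+ e.+1 * s - z * l.
      by rewrite -Hs addrAC subrr add0r mulrCA.
    by rewrite mulrBr E mulrA -exprSr addrAC addrK.
  apply: isId_B => //; exact: HM.
move=> /(@NZD_pow _ _ e Hy) H1.
have : addI L y (z * v) by exists (z * v - y * s), s; split=> //; rewrite subrK.
move=> /Hz [l' [u [Hl' Hv]]].
exists (l + y ^+ e * l'), u; split; first by apply: HD => //; exact: HM.
by rewrite Hwv Hv mulrDr -addrA mulrA -exprSr.
Qed.

Lemma POW1 K y e s : isId K -> NZD K y -> regl (addI K y) s -> regl (addI K (y ^+ e)) s.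
Proof.
elim: s K => [|z s IH] K HK Hy //= [Hz Hs]; split; first exact: TW.
have HKz : isId (addI K z) by exact: isId_addI.
apply: (regl_ext (addI_comm K z (y ^+ e))).
apply: IH => //.
- apply: swap1 => //; apply: NZD_ext Hz; exact: addI_comm.
- apply: regl_ext Hs; exact: addI_comm.
Qed.

Lemma POW K e s : isId K -> regl K s -> regl K (map (fun x => x ^+ e) s).
Proof.
elim: s K => [|y s IH] K HK //= [Hy Hs]; split; first exact: NZD_pow.
apply: IH; first exact: isId_addI.
exact: POW1.
Qed.

Lemma F2 I s e : isId I -> regl I s -> forall c,
  fullI I (map (fun x => x ^+ e.+1) s) (c * \prod_(x <- s) x ^+ e) -> fullI I s c.
Proof.
elim: s I => [|x s IH] I HI //=; first by move=> _ c; rewrite big_nil mulr1.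
move=> [Hx Hs] c; rewrite big_cons.
move/(fullI_addI _ _ _ _) => [y0 [r [Hy0 Heq]]].
set Y := fullI I (map (fun x => x ^+ e.+1) s) in Hy0.
have HY : isId Y by exact: isId_fullI.
have NY : NZD Y x.
  apply: SWAP => //; apply: POW => //; exact: isId_addI.
have : Y (x ^+ e * (c * \prod_(x0 <- s) x0 ^+ e - x * r)).
  rewrite mulrBr [x ^+ e * (c * _)]mulrCA Heq mulrA -exprSr addrK //.
move=> /(@NZD_pow _ _ e NY) H1.
apply: IH; [exact: isId_addI | exact: Hs |].
apply/fullI_addI; exists (c * \prod_(x0 <- s) x0 ^+ e - x * r), r; split=> //.
by rewrite subrK.
Qed.

End Alg.

Unset Implicit Arguments.
Unset Strict Implicit.

Unset Printing Implicit Defensive.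

Section Poly.
Variables (A : comNzRingType) (p : nat).
Hypothesis Hp : p \in [pchar A].

Lemma mpoly_pchar m : p \in [pchar (mpoly A m)].
Proof. elim: m => [|m IH] //=. by rewrite pchar_poly. Qed.

Lemma mulrn_p m (x : mpoly A m) : x *+ p = 0.
Proof. exact: mulrn_pchar (mpoly_pchar m) x. Qed.

Lemma mulrn_dvd m (x : mpoly A m) N : (p %| N)%N -> x *+ N = 0.
Proof. by move=> /divnK <-; rewrite mulrnA mulrn_p. Qed.

Lemma mulrn_modp m (x : mpoly A m) N : x *+ N = x *+ (N %% p).
Proof. rewrite {1}(divn_eq N p) mulrnDr (@mulrn_dvd _ _ (N %/ p * p)%N) ?add0r //. exact: dvdn_mull. Qed.

Lemma mulrn_eqmod m (x : mpoly A m) N1 N2 : N1 = N2 %[mod p] -> x *+ N1 = x *+ N2.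
Proof. by move=> H; rewrite mulrn_modp H -mulrn_modp. Qed.

Lemma prime_p : prime p. Proof. exact: pcharf_prime Hp. Qed.

Lemma mulrn_coprime m (x : mpoly A m) k : ~~ (p %| k)%N -> x *+ k = 0 -> x = 0.
Proof.
move=> Hk H0.
have p0 : (0 < p)%N by rewrite prime_gt0 // prime_p.
have [c _ Hc] := Bezoutl k p0.
have Hg : gcdn p k = 1%N by apply/eqP; rewrite -/(coprime p k) prime_coprime // prime_p.
rewrite Hg in Hc.
have : x *+ (1 + c * k) = 0 by exact: mulrn_dvd.
by rewrite mulrnDr mulnC mulrnA H0 mul0rn addr0 mulr1n.
Qed.

Lemma mconstD m : {morph @mconst A m : x y / x + y}.
Proof. elim: m => [|m IH] x y //=; by rewrite IH polyCD. Qed.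
Lemma mconstM m : {morph @mconst A m : x y / x * y}.
Proof. elim: m => [|m IH] x y //=; by rewrite IH polyCM. Qed.
Lemma mconstN m : {morph @mconst A m : x / - x}.
Proof. elim: m => [|m IH] x //=; by rewrite IH polyCN. Qed.
Lemma mconst0 m : @mconst A m 0 = 0.
Proof. elim: m => [|m IH] //=; by rewrite IH. Qed.
Lemma mconst1 m : @mconst A m 1 = 1.
Proof. elim: m => [|m IH] //=; by rewrite IH. Qed.
Lemma mconstX m x e : @mconst A m (x ^+ e) = mconst m x ^+ e.
Proof. elim: e => [|e IH]; by rewrite ?expr0 ?mconst1 // !exprS mconstM IH. Qed.
Lemma mconstMn m x e : @mconst A m (x *+ e) = mconst m x *+ e.
Proof. elim: e => [|e IH]; by rewrite ?mulr0n ?mconst0 // !mulrS mconstD IH. Qed.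

Lemma mderiv0 m i : @mderiv A m i 0 = 0.
Proof. case: m => [|m] //=; case: ifP => _; by rewrite ?deriv0 ?map_poly0. Qed.

Lemma mderivD m i : {morph @mderiv A m i : x y / x + y}.
Proof.
elim: m => [|m IH] x y /=; first by rewrite addr0.
case: ifP => _; first by rewrite derivD.
apply/polyP => k; rewrite coefD !coef_map_id0 ?mderiv0 //; by rewrite coefD IH.
Qed.

Lemma mderivN m i : {morph @mderiv A m i : x / - x}.
Proof.
elim: m => [|m IH] x /=; first by rewrite oppr0.
case: ifP => _; first by rewrite derivN.
apply/polyP => k; rewrite coefN !coef_map_id0 ?mderiv0 //; by rewrite coefN IH.
Qed.

Lemma mderivB m i x y : @mderiv A m i (x - y) = mderiv i x - mderiv i y.
Proof. by rewrite mderivD mderivN. Qed.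

Lemma mderiv_sum m i (I : Type) (r : seq I) (P : pred I) (F : I -> mpoly A m) :
  mderiv i (\sum_(j <- r | P j) F j) = \sum_(j <- r | P j) mderiv i (F j).
Proof. exact: (big_morph _ (mderivD m i) (mderiv0 m i)). Qed.

Lemma mderiv_mconst m i x (y : mpoly A m) : mderiv i (mconst m x * y) = mconst m x * mderiv i y.
Proof.
elim: m y => [|m IH] y /=; first by rewrite mulr0.
case: ifP => _.
  apply/polyP => k; by rewrite coef_deriv !coefCM coef_deriv mulrnAr.
apply/polyP => k; rewrite coefCM !coef_map_id0 ?mderiv0 //; by rewrite coefCM IH.
Qed.

Lemma mderivM m i (x y : mpoly A m) : mderiv i (x * y) = mderiv i x * y + x * mderiv i y.
Proof.
elim: m x y => [|m IH] x y /=; first by rewrite mul0r mulr0 addr0.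
case: ifP => _; first by rewrite derivM.
apply/polyP => k; rewrite coefD !coefM !coef_map_id0 ?mderiv0 // coefM mderiv_sum.
rewrite -big_split /=; apply: eq_bigr => j _.
by rewrite IH !coef_map_id0 ?mderiv0.
Qed.

Lemma mderiv1 m i : @mderiv A m i 1 = 0.
Proof.
have := mderivM m i (1 : mpoly A m) 1; rewrite !mul1r mulr1 => H.
by apply: (@addrI _ (mderiv i (1 : mpoly A m))); rewrite addr0 -H.
Qed.

Lemma mderivX m i (x : mpoly A m) k :
  mderiv i (x ^+ k.+1) = (x ^+ k * mderiv i x) *+ k.+1.
Proof.
elim: k => [|k IH]; first by rewrite expr1 expr0 mul1r.
rewrite exprS mderivM IH mulrnAr mulrA -exprS mulrS.
by rewrite [mderiv i x * _]mulrC -!mulrS.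
Qed.

Lemma mderiv_powp m i (x : mpoly A m) : mderiv i (x ^+ p) = 0.
Proof.
have p0 : (0 < p)%N by rewrite prime_gt0 // prime_p.
by rewrite -(prednK p0) mderivX prednK // mulrn_p.
Qed.

Lemma iter_mderiv0 m i j : iter j (@mderiv A m i) 0 = 0.
Proof. by elim: j => [|j IHj] //=; rewrite IHj mderiv0. Qed.

Lemma iter_deriv_p m i (x : mpoly A m) : (i < m)%N -> iter p (mderiv i) x = 0.
Proof.
elim: m x => [|m IH] x Him; first by rewrite ltn0 in Him.
case: (ltngtP i m) => [Hlt|Hgt|Heq]; last first.
- subst i.
  have E : forall j, iter j (mderiv m) x = derivn j x.
    by elim=> [|j IHj] //=; rewrite IHj eqxx.
  rewrite E; apply/polyP => k; rewrite coef_derivn coef0; apply: mulrn_dvd.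
  rewrite -bin_ffact dvdn_mull // dvdn_fact // prime_gt0 ?prime_p //=.
- by move: Him; rewrite ltnS leqNgt Hgt.
- have Hf : (i == m) = false by rewrite ltn_eqF.
  have E : forall j, iter j (mderiv i) x = map_poly (iter j (@mderiv A m i)) x.
    elim=> [|j IHj]; first by rewrite map_poly_id.
    rewrite iterS IHj /= Hf; apply/polyP => k.
    by rewrite !coef_map_id0 ?mderiv0 ?iter_mderiv0.
  rewrite E; apply/polyP => k; rewrite coef0 coef_map_id0 ?iter_mderiv0 //.
  exact: IH.
Qed.

End Poly.

Unset Printing Implicit Defensive.

Section ImD.
Variables (A : comNzRingType) (p : nat).
Hypothesis Hp : p \in [pchar A].
Variables (n : nat) (a : 'I_n -> A).

Notation D i h := (mderiv i h - mconst n (a i) * h).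

Lemma imD0 : imD a 0.
Proof. by exists (fun _ => 0); rewrite big1 // => i _; rewrite mderiv0 mulr0 subr0. Qed.

Lemma imDD x y : imD a x -> imD a y -> imD a (x + y).
Proof.
move=> [h1 ->] [h2 ->]; exists (fun i => h1 i + h2 i).
rewrite -big_split; apply: eq_bigr => i _ /=.
by rewrite mderivD mulrDr opprD addrACA.
Qed.

Lemma imDN x : imD a x -> imD a (- x).
Proof.
move=> [h ->]; exists (fun i => - h i).
rewrite -sumrN; apply: eq_bigr => i _ /=.
by rewrite mderivN mulrN opprD.
Qed.

Lemma imDB x y : imD a x -> imD a y -> imD a (x - y).
Proof. by move=> Hx Hy; apply: imDD => //; apply: imDN. Qed.

Lemma imD_single (i : 'I_n) t : imD a (D i t).
Proof.
exists (fun j => if j == i then t else 0).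
rewrite (bigD1 i) //= eqxx big1 ?addr0 // => j /negbTE ->.
by rewrite mderiv0 mulr0 subr0.
Qed.

Lemma imD_sum (I : Type) (r : seq I) (P : pred I) (F : I -> mpoly A n) :
  (forall j, P j -> imD a (F j)) -> imD a (\sum_(j <- r | P j) F j).
Proof. move=> H; apply: (big_ind (imD a)) => //; [exact: imD0 | exact: imDD]. Qed.

Lemma imD_apow (i : 'I_n) h : imD a (mconst n (a i ^+ p) * h).
Proof.
set al := mconst n (a i).
set T := \sum_(0 <= k < p) al ^+ (p.-1 - k) * iter k (mderiv i) h.
have E1 : forall k, (p.-1 - k = p - k.+1)%N by move=> k; rewrite -add1n subnDA subn1.
have HT : D i T = \sum_(0 <= k < p)
     (al ^+ (p - k.+1) * iter k.+1 (mderiv i) h - al ^+ (p - k) * iter k (mderiv i) h).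
  rewrite mderiv_sum mulr_sumr -sumrB; apply: eq_big_nat => k /andP[_ Hk].
  rewrite /al -mconstX mderiv_mconst mconstX iterS E1; congr (_ - _).
  by rewrite mulrA -exprS -subSn.
rewrite telescope_sumr // in HT.
rewrite subn0 subnn expr0 mul1r iter_deriv_p // in HT.
have -> : mconst n (a i ^+ p) * h = D i (- T).
  by rewrite mderivN mulrN -opprD HT /al mconstX add0r opprK.
exact: imD_single.
Qed.

End ImD.

Unset Printing Implicit Defensive.

Section LOp.
Variables (A : comNzRingType) (p : nat).
Hypothesis Hp : p \in [pchar A].
Variable b : nat -> A.

Definition L1 (R : comNzRingType) (al : R) (q : {poly R}) : {poly R} :=
  \poly_(k < size q) (if (p %| k)%N then
     \sum_(0 <= j < p) q`_(k + j) * (al ^+ (p.-1 - j) *+ j`!) else 0).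
Arguments L1 {R}.

Lemma coef_L1 (R : comNzRingType) (al : R) q k : (L1 al q)`_k =
  if (p %| k)%N then \sum_(0 <= j < p) q`_(k + j) * (al ^+ (p.-1 - j) *+ j`!) else 0.
Proof.
rewrite coef_poly; case: ltnP => // Hk; case: ifP => // _.
rewrite big1 // => j _; by rewrite nth_default ?mul0r // (leq_trans Hk) ?leq_addr.
Qed.

Fixpoint Lm m : mpoly A m -> mpoly A m :=
  match m return mpoly A m -> mpoly A m with
  | 0 => fun x => x
  | m'.+1 => fun q => map_poly (@Lm m') (L1 (mconst m' (b m')) q)
  end.

Lemma Lm0 m : Lm m 0 = 0.
Proof.
elim: m => [|m IH] //=; apply/polyP => k.
by rewrite coef_map_id0 // coef_L1 coef0; case: ifP => _; rewrite ?IH // big1 ?IH // => j _; rewrite coef0 mul0r.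
Qed.

Lemma LmD m : {morph Lm m : x y / x + y}.
Proof.
elim: m => [|m IH] x y //=; apply/polyP => k.
rewrite coefD !coef_map_id0 ?Lm0 // !coef_L1; case: ifP => _; last by rewrite Lm0 addr0.
by rewrite -IH -big_split; congr (Lm _ _); apply: eq_bigr => j _; rewrite coefD mulrDl.
Qed.

Lemma LmN m : {morph Lm m : x / - x}.
Proof.
elim: m => [|m IH] x //=; apply/polyP => k.
rewrite coefN !coef_map_id0 ?Lm0 // !coef_L1; case: ifP => _; last by rewrite Lm0 oppr0.
by rewrite -IH -sumrN; congr (Lm _ _); apply: eq_bigr => j _; rewrite coefN mulNr.
Qed.

Lemma Lm_sum m (I : Type) (r : seq I) (P : pred I) (F : I -> mpoly A m) :
  Lm m (\sum_(j <- r | P j) F j) = \sum_(j <- r | P j) Lm m (F j).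
Proof. exact: (big_morph _ (LmD m) (Lm0 m)). Qed.

Lemma Lm_mconst m x y : Lm m (mconst m x * y) = mconst m x * Lm m y.
Proof.
elim: m y => [|m IH] y //=; apply/polyP => k.
rewrite coefCM !coef_map_id0 ?Lm0 // !coef_L1; case: ifP => _; last by rewrite Lm0 mulr0.
rewrite -IH mulr_sumr; congr (Lm _ _); apply: eq_bigr => j _; by rewrite coefCM mulrA.
Qed.

Fixpoint coefs_in (P : A -> Prop) m : mpoly A m -> Prop :=
  match m return mpoly A m -> Prop with
  | 0 => fun x => P x
  | m'.+1 => fun (q : {poly mpoly A m'}) => forall k, coefs_in P m' (q`_k)
  end.
Arguments coefs_in P {m}.

Lemma coefs_in_mono (P Q : A -> Prop) m (x : mpoly A m) :
  (forall c, P c -> Q c) -> coefs_in P x -> coefs_in Q x.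
Proof. move=> H; elim: m x => [|m IH] x /=; [exact: H | move=> Hx k; exact: IH]. Qed.

Lemma coefs_in_mconst (J : A -> Prop) m x (y : mpoly A m) :
  isId J -> J x -> coefs_in J (mconst m x * y).
Proof.
move=> HJ Hx; elim: m y => [|m IH] y /=; first by case: HJ => _ _ HM; rewrite mulrC; apply: HM.
by move=> k; rewrite coefCM.
Qed.

Lemma coefs_in_mconstE (J : A -> Prop) m x (y : mpoly A m) :
  coefs_in J (mconst m x * y) -> coefs_in (fun c => J (x * c)) y.
Proof.
elim: m y => [|m IH] y //=; move=> H k; apply: IH; by rewrite -coefCM.
Qed.

Lemma coefs_in0 (J : A -> Prop) m : isId J -> coefs_in J (0 : mpoly A m).
Proof. move=> [H0 _ _]; elim: m => [|m IH] //= k; by rewrite coef0. Qed.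

Lemma coefs_inD (J : A -> Prop) m (x y : mpoly A m) : isId J ->
  coefs_in J x -> coefs_in J y -> coefs_in J (x + y).
Proof.
move=> [_ HD _]; elim: m x y => [|m IH] x y /=; first exact: HD.
by move=> Hx Hy k; rewrite coefD; apply: IH.
Qed.

Lemma L1_Dout m (al : mpoly A m) (q : {poly mpoly A m}) k :
  (L1 al (q^`() - al%:P * q))`_k = al ^+ p * - (if (p %| k)%N then q`_k else 0).
Proof.
rewrite coef_L1; case: ifP => Hk; last by rewrite oppr0 mulr0.
have Hk0 : (k %% p = 0)%N by apply/eqP.
have p0 : (0 < p)%N := prime_gt0 (prime_p A p Hp).
pose G := fun j => q`_(k + j) * (al ^+ (p - j) *+ j`!).
rewrite (@telescope_sumr_eq _ 0 p G) //.
- have Gp : G p = 0.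
    rewrite /G (mulrn_dvd A p Hp m _ (p`!)) ?mulr0 //.
    by rewrite dvdn_fact // p0 leqnn.
  rewrite Gp /G subn0 fact0 mulr1n addn0 sub0r.
  by rewrite mulrN mulrC.
- move=> j /andP[_ Hj]; rewrite /G coefB coef_deriv coefCM mulrBl.
  have E1 : (p.-1 - j = p - j.+1)%N by rewrite -add1n subnDA subn1.
  have E2 : (p - j = (p.-1 - j).+1)%N by rewrite -subSn ?prednK // -ltnS prednK.
  congr (_ - _).
  + rewrite -addnS (mulrn_eqmod A p Hp m _ (k + j.+1) j.+1); last first.
      by rewrite -modnDml Hk0 add0n.
    by rewrite E1 mulrnAl !mulrnAr -mulrnA factS mulnC.
  + have -> : al ^+ (p - j) = al * al ^+ (p.-1 - j) by rewrite E2 exprS.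
    by rewrite [al * q`_(k + j)]mulrC -mulrA !mulrnAr mulrA.
Qed.

Lemma L1_comm m (al : mpoly A m) (Df : mpoly A m -> mpoly A m) (q E : {poly mpoly A m}) k :
  (forall x y, Df (x + y) = Df x + Df y) -> Df 0 = 0 ->
  (forall j y, Df (y * (al ^+ (p.-1 - j) *+ j`!)) = Df y * (al ^+ (p.-1 - j) *+ j`!)) ->
  (forall t, E`_t = Df (q`_t)) -> (L1 al E)`_k = Df ((L1 al q)`_k).
Proof.
move=> HD H0 HM HE; rewrite !coef_L1; case: ifP => _; last by rewrite H0.
rewrite (big_morph Df HD H0); apply: eq_bigr => j _; by rewrite HE HM.
Qed.

Lemma Lkill (n : nat) (J : A -> Prop) : isId J -> (forall k r, (k < n)%N -> J (b k ^+ p * r)) ->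
  forall m, (m <= n)%N -> forall i, (i < m)%N -> forall h : mpoly A m,
  coefs_in J (Lm m (mderiv i h - mconst m (b i) * h)).
Proof.
move=> HJ HJb; elim=> [|m IH] Hmn i Him h; first by rewrite ltn0 in Him.
move=> k; rewrite /= coef_map_id0 ?Lm0 //.
case: (ltngtP i m) => [Hlt|Hgt|Heq]; last first.
- subst i; rewrite L1_Dout -mconstX Lm_mconst; apply: coefs_in_mconst => //.
  by have := HJb m 1 Hmn; rewrite mulr1.
- by move: Him; rewrite ltnS leqNgt Hgt.
rewrite (@L1_comm _ _ (fun y => mderiv i y - mconst m (b i) * y) h).
- exact: IH (ltnW Hmn) i Hlt _.
- by move=> x y; rewrite mderivD mulrDr opprD addrACA.
- by rewrite mderiv0 mulr0 subr0.
- move=> j y; rewrite -mconstX -mconstMn [y * _]mulrC mderiv_mconst.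
  by rewrite [RHS]mulrC mulrBr [_ * (mconst m (b i) * y)]mulrCA.
- by move=> t; rewrite coefB coef_map_id0 ?mderiv0 // coefCM.
Qed.

Lemma Lconst m (u : mpoly A m) : (forall i, (i < m)%N -> mderiv i u = 0) ->
  Lm m u = mconst m (\prod_(i < m) b i ^+ p.-1) * u.
Proof.
elim: m u => [|m IH] u Hu; first by rewrite big_ord0 /= mul1r.
have Hd : u^`() = 0 by have := Hu m (ltnSn m); rewrite /= eqxx.
have Hc : forall i k, (i < m)%N -> mderiv i (u`_k) = 0.
  move=> i k Him; have := Hu i (ltnW Him); rewrite /= (ltn_eqF Him) => /polyP /(_ k).
  by rewrite coef_map_id0 ?mderiv0 // coef0.
have Hz : forall k, ~~ (p %| k)%N -> u`_k = 0.
  case=> [|k] Hk; first by rewrite dvdn0 in Hk.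
  apply: (mulrn_coprime A p Hp m _ k.+1 Hk).
  by rewrite -coef_deriv Hd coef0.
have p0 : (0 < p)%N := prime_gt0 (prime_p A p Hp).
apply/polyP => k; rewrite /= coefCM coef_map_id0 ?Lm0 //.
have -> : (L1 (mconst m (b m)) u)`_k = mconst m (b m ^+ p.-1) * u`_k.
  rewrite coef_L1; case: ifP => Hk; last by rewrite Hz ?Hk // mulr0.
  rewrite big_ltn // big_nat_cond big1 ?addr0.
    by rewrite addn0 subn0 fact0 mulr1n mconstX mulrC.
  move=> j /andP[/andP[Hj1 Hj2] _]; rewrite Hz ?mul0r //.
  by rewrite dvdn_addr // gtnNdvd.
rewrite Lm_mconst IH; last by move=> i Hi; apply: Hc.
rewrite big_ord_recr /= mconstM.
by rewrite mulrA [mconst m (b m ^+ _) * _]mulrC.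
Qed.

End LOp.
Arguments coefs_in {A} P {m}.
Arguments Lm {A} p b {m}.

Unset Printing Implicit Defensive.

Section Conv.
Variable A : comNzRingType.

Lemma fullI_sum (I : A -> Prop) s x : fullI I s x <->
  exists i (c : nat -> A), I i /\ x = i + \sum_(j < size s) c j * s`_j.
Proof.
elim: s I x => [|y s IH] I x /=.
  split; first by move=> Hx; exists x, (fun _ => 0); rewrite big_ord0 addr0.
  by move=> [i [c [Hi ->]]]; rewrite big_ord0 addr0.
rewrite IH; split.
- move=> [i [c [[i0 [t [Hi0 ->]]] ->]]].
  exists i0, (fun j => if j is j'.+1 then c j' else t); split=> //.
  by rewrite big_ord_recl /= addrA [y * t]mulrC.
- move=> [i0 [c [Hi0 ->]]]; exists (i0 + y * c 0%N), (fun j => c j.+1); split.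
    by exists i0, (c 0%N).
  by rewrite big_ord_recl /= addrA [y * _]mulrC.
Qed.

Lemma fullI_mem (I : A -> Prop) s y r : isId I -> y \in s -> fullI I s (y * r).
Proof.
elim: s I => [|z s IH] I HI //=; rewrite inE => /orP[/eqP ->|Hy].
  apply: fullI_base; exact: addI_gen.
apply: IH => //; exact: isId_addI.
Qed.

Lemma regl_nth (I : A -> Prop) s :
  (forall k, (k < size s)%N -> NZD (fullI I (take k s)) (nth 0 s k)) -> regl I s.
Proof.
elim: s I => [|y s IH] I H //=; split; first exact: (H 0%N).
apply: IH => k Hk; exact: (H k.+1).
Qed.

Definition zeroI : A -> Prop := fun x => x = 0.
Lemma isId_zero : isId zeroI.
Proof. by split=> [|x y -> ->|x y ->]; rewrite ?addr0 ?mulr0. Qed.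

End Conv.
Arguments zeroI {A}.

Section Main.
Variables (A : comNzRingType) (n : nat).

Definition ext (f : 'I_n -> A) : nat -> A :=
  fun j => match insub j with Some i => f i | None => 0 end.

Lemma extE f (i : 'I_n) : ext f i = f i.
Proof. rewrite /ext; case: insubP => [j _ /val_inj -> // |]; by rewrite ltn_ord. Qed.

Variable a : 'I_n -> A.
Let b := ext a.

Lemma iif_conv k x : (k <= n)%N -> in_ideal_first a k x <-> fullI (@zeroI A) (mkseq b k) x.
Proof.
move=> Hk; rewrite fullI_sum size_mkseq.
have E : forall c : nat -> A, \sum_(j < k) c j * (mkseq b k)`_j = \sum_(j < k) c j * b j.
  by move=> c; apply: eq_bigr => j _; rewrite nth_mkseq.
split.
- move=> [c ->]; exists 0, (ext c); split=> //; rewrite add0r E.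
  rewrite (big_ord_widen n (fun j => ext c j * b j) Hk).
  by apply: eq_bigr => j _; rewrite /b !extE.
- move=> [i [c [-> ->]]]; exists (fun j => c (val j)); rewrite add0r E.
  rewrite (big_ord_widen n (fun j => c j * b j) Hk).
  by apply: eq_bigr => j _; rewrite /b !extE.
Qed.

Lemma regl_of : regular_seq a -> regl (@zeroI A) (mkseq b n).
Proof.
move=> [Hreg _]; apply: regl_nth => k; rewrite size_mkseq => Hk.
have -> : take k (mkseq b n) = mkseq b k.
  by rewrite /mkseq -map_take take_iota (minn_idPl (ltnW Hk)).
rewrite nth_mkseq // => z.
move/(iif_conv _ _ (ltnW Hk)) => H; apply/(iif_conv _ _ (ltnW Hk)).
have := Hreg (Ordinal Hk) z; rewrite /= -(extE a (Ordinal Hk)) /=; exact.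
Qed.

End Main.

Unset Printing Implicit Defensive.

Lemma coefs_to_ideal (A : comNzRingType) (n : nat) (b : nat -> A) m (u : mpoly A m) :
  coefs_in (fullI zeroI (mkseq b n)) u ->
  exists t : 'I_n -> mpoly A m, u = \sum_(i < n) mconst m (b i) * t i.
Proof.
elim: m u => [|m IH] u /=.
  move/fullI_sum => [i [c [-> ->]]]; exists (fun i => c (val i)).
  rewrite add0r size_mkseq; apply: eq_bigr => j _; by rewrite nth_mkseq // mulrC.
move=> H.
have H' : forall k, exists t : 'I_n -> mpoly A m, u`_k = \sum_(i < n) mconst m (b i) * t i.
  move=> k; exact: IH (H k).
pose T k := proj1_sig (constructive_indefinite_description _ (H' k)).
have HT : forall k, u`_k = \sum_(i < n) mconst m (b i) * T k i.
  move=> k; exact: (proj2_sig (constructive_indefinite_description _ (H' k))).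
exists (fun i => \poly_(k < size u) T k i).
apply/polyP => k; rewrite coef_sum.
have -> : \sum_(i < n) ((mconst m.+1 (b i) * \poly_(k0 < size u) T k0 i) : {poly mpoly A m})`_k
   = \sum_(i < n) mconst m (b i) * (if (k < size u)%N then T k i else 0).
  by apply: eq_bigr => i _; rewrite /= coefCM coef_poly.
case: ltnP => Hk; first exact: HT.
rewrite nth_default // big1 // => i _; by rewrite mulr0.
Qed.

Lemma frob_sum (A : comNzRingType) (p : nat) (Hp : p \in [pchar A]) m n
   (c t : 'I_n -> mpoly A m) :
  (\sum_(i < n) c i * t i) ^+ p = \sum_(i < n) c i ^+ p * t i ^+ p.
Proof.
have Hc := mpoly_pchar A p Hp m.
rewrite -(pFrobenius_autE Hc) rmorph_sum; apply: eq_bigr => i _.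
by rewrite rmorphM /= !pFrobenius_autE.
Qed.

Theorem theorem2p2 (p : nat) (A : comNzRingType) (n : nat) (a : 'I_n -> A) :
  p \in [pchar A] ->
  regular_seq a ->
  Mathieu_subspace (@imD A n a).
Proof.
move=> Hp Hreg.
have p0 : (0 < p)%N := prime_gt0 (prime_p A p Hp).
split.
- exact: (imD0 A n a).
- move=> x y; exact: (imDB A n a x y).
- move=> x y; exact: (imDD A n a x y).
move=> f Hf g; exists (p * p)%N => m Hm.
set b := ext A n a.
set u := f ^+ p.
have Hu : imD a u := Hf p p0.
have Hdu : forall i, (i < n)%N -> mderiv i u = 0.
  move=> i _; exact: (mderiv_powp A p Hp).
set J := fullI zeroI (map (fun x => x ^+ p) (mkseq b n)).
have HJ : isId J by apply: isId_fullI; exact: (isId_zero A).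
have HJb : forall k r, (k < n)%N -> J (b k ^+ p * r).
  move=> k r Hk; apply: fullI_mem; first exact: (isId_zero A).
  by apply: map_f; rewrite /mkseq; apply: map_f; rewrite mem_iota.
have HL : coefs_in J (Lm p b u).
  move: Hu => [h ->]; rewrite (Lm_sum A p b n).
  apply: (big_ind (coefs_in J)); [exact: (coefs_in0 A J n HJ) | move=> x y; exact: (coefs_inD A J n x y HJ) |].
  move=> i _; rewrite -(extE A n a i) -/b.
  exact: (Lkill A p Hp b n J HJ HJb n (leqnn n) i (ltn_ord i) (h i)).
rewrite (Lconst A p Hp b n u Hdu) in HL.
move/(coefs_in_mconstE A J n): HL => HL.
have HI : coefs_in (fullI zeroI (mkseq b n)) u.
  apply: (coefs_in_mono A _ _ n u _ HL) => c Hc.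
  apply: (F2 (isId_zero A) (regl_of A n a Hreg) (e := p.-1)).
  rewrite prednK // mulrC.
  have -> : \prod_(x <- mkseq b n) x ^+ p.-1 = \prod_(i < n) b i ^+ p.-1.
    rewrite /mkseq big_map.
    by rewrite -(big_mkord xpredT (fun i => b i ^+ p.-1)) /index_iota subn0.
  exact: Hc.
have [t Ht] := coefs_to_ideal A n b n u HI.
have -> : f ^+ m * g = u ^+ p * (f ^+ (m - p * p) * g).
  by rewrite /u -exprM mulrA -exprD subnKC.
rewrite Ht (frob_sum A p Hp) mulr_suml; apply: (imD_sum A n a) => i _.
rewrite -mulrA -mconstX /b extE; exact: (imD_apow A p Hp).
Qed.
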